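(* Let $G=\mathbb Z\wr\mathbb Z=\langle y\rangle\wr\langle x\rangle$ and $H=\langle y\rangle^{\langle x\rangle}\langle x^2\rangle$ (a normal subgroup of index 2). Let $f_1:H\to G$ be the homomorphism with $y^{x^{2n}}\mapsto y^{x^n}$, $y^{x^{2n+1}}\mapsto1$, $x^{2n}\mapsto x^n$ ($n\in\mathbb Z$), let $f_2:G\to G$ be the homomorphism with $y\mapsto x$, $x\mapsto1$, and let $f_1':H\to G$, $h\mapsto(x^{-1}hx)^{f_1}$. Then the $G$-data $((2,2,2),(H,H,H),(f_1,f_1',f_2|_H))$ is simple with trivial parabolic subgroup, and it induces a faithful finite-state self-similar representation $G\cong\langle\gamma_1,\alpha_1\rangle\le\mathcal F_6$, where $\gamma_1,\alpha_1\in\mathcal A_6$ are defined by $\gamma_1=(\gamma_1,e,e,\gamma_1,\alpha_1,\alpha_1)$ and $\alpha_1=(e,\alpha_1,e,\alpha_1,e,e)(1\,2)(3\,4)$.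
   Context: Conventions: maps written on the right, $u^v=v^{-1}uv$; wreath products are restricted. For $n\ge2$, $\mathcal A_n$ is the automorphism group of the one-rooted $n$-regular tree with vertices the finite words over $\{1,\dots,n\}$; $\alpha\in\mathcal A_n$ is written $\alpha=(\alpha_1,\dots,\alpha_n)\sigma(\alpha)$ with $\sigma(\alpha)\in S_n$ the first-level action and $\alpha_i$ the states, meaning $(y_1y_2\cdots y_k)^{\alpha}=(y_1)^{\sigma(\alpha)}(y_2\cdots y_k)^{\alpha_{y_1}}$; $e$ is the identity; $\alpha$ is finite-state if its set of states $Q(\alpha)=\{\alpha\}\cup\bigcup_iQ(\alpha_i)$ is finite, and $\mathcal F_n$ is the group of finite-state automorphisms. A $G$-data $(\mathbf m,\mathbf H,\mathbf F)$ consists of subgroups $H_1,\dots,H_s$ with $[G:H_i]=m_i$, $m=\sum m_i$, and homomorphisms $f_i:H_i\to G$. Choosing right transversals $T_i$ of $H_i$, with $\theta_i(g,t)=tg(t')^{-1}$ where $H_it'=H_itg$ and $g^\sigma$ the permutation $t\mapsto t'$ of $T_1\sqcup\dots\sqcup T_s\cong\{1,\dots,m\}$, the data induces $\varphi:G\to\mathcal A_m$, $g^\varphi=((\theta_i(g,t)^{f_i})^\varphi\mid t\in T_i,1\le i\le s)\,g^\sigma$, whose kernel is the $\mathbf F$-core: the largest subgroup of $\bigcap_iH_i$ normal in $G$ and $f_i$-invariant for all $i$ ($K$ is $f$-invariant if $K\subseteq\mathrm{dom}(f)$ and $K^f\le K$). The data is simple if the $\mathbf F$-core is trivial. The parabolic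 subgroup of the data is the largest subgroup of $\bigcap_iH_i$ which is $f_i$-invariant for all $i$. *)

(* Defs.v *)
From mathcomp Require Import all_boot.
From Stdlib Require Import ZArith Lia IndefiniteDescription.

Set Implicit Arguments.
Unset Strict Implicit.
Unset Printing Implicit Defensive.

Record grp := Grp {
  gcar :> Type;
  gmul : gcar -> gcar -> gcar;
  ginv : gcar -> gcar;
  gone : gcar }.

Arguments gmul {g} _ _.
Arguments ginv {g} _.
Arguments gone {g}.

Definition is_subgroup (G : grp) (S : G -> Prop) : Prop :=
  S gone /\ (forall a b, S a -> S b -> S (gmul a b)) /\ (forall a, S a -> S (ginv a)).

Definition is_normal (G : grp) (S : G -> Prop) : Prop :=
  forall g s, S s -> S (gmul (gmul (ginv g) s) g).

(* f is a homomorphism H -> G (values outside H are irrelevant) *)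
Definition is_hom_on (G : grp) (H : G -> Prop) (f : G -> G) : Prop :=
  forall a b, H a -> H b -> f (gmul a b) = gmul (f a) (f b).

(* T (a list) is a right transversal of H: every right coset Hg contains
   exactly one listed element (Hg = Ht iff g t^-1 \in H). *)
Definition right_transversal (G : grp) (H : G -> Prop) (T : seq G) : Prop :=
  (forall g, exists t, List.In t T /\ H (gmul g (ginv t))) /\
  (forall k l, k < size T -> l < size T -> k <> l ->
     ~ H (gmul (nth gone T k) (ginv (nth gone T l)))).

Record piece (G : grp) := Piece { pH : G -> bool; pf : G -> G; pT : seq G }.

Definition dflt_piece (G : grp) : piece G := Piece (fun _ : G => false) id [::].

(* validity of the data: H_i subgroups, f_i homomorphisms H_i -> G,
   T_i right transversals (so m_i = size T_i = [G : H_i]) *)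
Definition valid_gdata (G : grp) (D : seq (piece G)) : Prop :=
  forall P, List.In P D ->
    is_subgroup (fun g => pH P g) /\ is_hom_on (fun g => pH P g) (pf P) /\
    right_transversal (fun g => pH P g) (pT P).

Definition f_invariant (G : grp) (dom : G -> Prop) (f : G -> G) (K : G -> Prop) :=
  (forall k, K k -> dom k) /\ (forall k, K k -> K (f k)).

Definition trivial_sub (G : grp) (K : G -> Prop) : Prop := forall k, K k -> k = gone.

(* The F-core is trivial: every subgroup of \bigcap H_i that is normal in G
   and f_i-invariant for all i is trivial (equivalently, the largest such
   subgroup is trivial). *)
Definition gdata_simple (G : grp) (D : seq (piece G)) : Prop :=
  forall K : G -> Prop, is_subgroup K ->
    (forall P, List.In P D -> forall k, K k -> pH P k) ->
    is_normal K ->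
    (forall P, List.In P D -> f_invariant (fun g => pH P g) (pf P) K) ->
    trivial_sub K.

Definition parabolic_trivial (G : grp) (D : seq (piece G)) : Prop :=
  forall K : G -> Prop, is_subgroup K ->
    (forall P, List.In P D -> forall k, K k -> pH P k) ->
    (forall P, List.In P D -> f_invariant (fun g => pH P g) (pf P) K) ->
    trivial_sub K.

(* The points T_1 \sqcup ... \sqcup T_s, in order; a point is (i, t). *)
Definition pts (G : grp) (D : seq (piece G)) : seq (nat * G) :=
  flatten [seq [seq (ip.1, t) | t <- pT ip.2] | ip <- zip (iota 0 (size D)) D].

Section Induced.
Variables (G : grp) (D : seq (piece G)).
Local Notation m := (size (pts D)).

Definition pt (p : 'I_m) : nat * G := nth (0, gone) (pts D) p.
Definition ppiece (p : 'I_m) : piece G := nth (dflt_piece G) D (pt p).1.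

Definition gsigma (g : G) (p : 'I_m) : 'I_m :=
  odflt p [pick q : 'I_m | ((pt q).1 == (pt p).1) &&
                           pH (ppiece p) (gmul (gmul (pt p).2 g) (ginv (pt q).2))].

Definition gtheta (g : G) (p : 'I_m) : G :=
  gmul (gmul (pt p).2 g) (ginv (pt (gsigma g p)).2).

Definition gstate (g : G) (p : 'I_m) : G := pf (ppiece p) (gtheta g p).

Fixpoint phi_act (g : G) (w : seq 'I_m) {struct w} : seq 'I_m :=
  match w with
  | [::] => [::]
  | p :: w' => gsigma g p :: phi_act (gstate g p) w'
  end.
End Induced.
Arguments phi_act {G} D g w.
Arguments gsigma {G} D g p.
Arguments gtheta {G} D g p.
Arguments gstate {G} D g p.
Arguments pt {G} D p.
Arguments ppiece {G} D p.

Definition is_tree_aut (m : nat) (f : seq 'I_m -> seq 'I_m) : Prop :=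
  f [::] = [::] /\ (forall v i, exists j, f (rcons v i) = rcons (f v) j) /\ bijective f.

Definition section (m : nat) (f : seq 'I_m -> seq 'I_m) (v : seq 'I_m) :
  seq 'I_m -> seq 'I_m := fun w => drop (size v) (f (v ++ w)).

Definition finite_state (m : nat) (f : seq 'I_m -> seq 'I_m) : Prop :=
  exists L : seq (seq 'I_m -> seq 'I_m), forall v, List.In (section f v) L.

(* subgroup of A_m generated by a list S (product = apply left factor first) *)
Inductive gen_sub (m : nat) (S : seq (seq 'I_m -> seq 'I_m)) :
  (seq 'I_m -> seq 'I_m) -> Prop :=
| gen_id : gen_sub S id
| gen_in f : List.In f S -> gen_sub S f
| gen_mul f g : gen_sub S f -> gen_sub S g -> gen_sub S (fun w => g (f w))
| gen_inv f g : gen_sub S f -> cancel f g -> cancel g f -> gen_sub S g.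

(* G = Z wr Z = <y> wr <x> (restricted), elements (a, n) = a x^n with  *)
(* a : Z -> Z finitely supported, a = prod_k (y^{x^k})^{a k}.           *)
(* (a,n)(b,m) = (j |-> a j + b (j+n), n+m);  y^{x^k} = (delta_k, 0).    *)
Definition fsupp (a : Z -> Z) : Prop :=
  exists N : Z, forall j : Z, (N < Z.abs j)%Z -> a j = 0%Z.

Definition ZwrZ := { p : (Z -> Z) * Z | fsupp p.1 }.

Lemma fsupp_mul (a b : Z -> Z) (n : Z) :
  fsupp a -> fsupp b -> fsupp (fun j => (a j + b (j + n)%Z)%Z).
Proof.
intros [Na Ha] [Nb Hb]; exists (Z.abs Na + Z.abs Nb + Z.abs n)%Z; intros j Hj.
assert (E1 : a j = 0%Z) by (apply Ha; lia).
assert (E2 : b (j + n)%Z = 0%Z) by (apply Hb; lia).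
lia.
Qed.

Lemma fsupp_inv (a : Z -> Z) (n : Z) : fsupp a -> fsupp (fun j => (- a (j - n)%Z)%Z).
Proof.
intros [Na Ha]; exists (Z.abs Na + Z.abs n)%Z; intros j Hj.
assert (E1 : a (j - n)%Z = 0%Z) by (apply Ha; lia).
lia.
Qed.

Lemma fsupp0 : fsupp (fun _ => 0%Z).
Proof. by exists 0%Z. Qed.

Lemma fsupp_delta0 : fsupp (fun j => if (j =? 0)%Z then 1%Z else 0%Z).
Proof.
exists 0%Z; intros j Hj.
destruct (Z.eqb_spec j 0); [lia | reflexivity].
Qed.

Lemma fsupp_dil (a : Z -> Z) : fsupp a -> fsupp (fun j => a (2 * j)%Z).
Proof.
intros [Na Ha]; exists (Z.abs Na)%Z; intros j Hj; apply Ha; lia.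
Qed.

Definition zw_mul (g h : ZwrZ) : ZwrZ :=
  let a := (proj1_sig g).1 in let n := (proj1_sig g).2 in
  let b := (proj1_sig h).1 in let k := (proj1_sig h).2 in
  exist (fun p => fsupp p.1) (fun j => (a j + b (j + n)%Z)%Z, (n + k)%Z)
        (fsupp_mul n (proj2_sig g) (proj2_sig h)).

Definition zw_inv (g : ZwrZ) : ZwrZ :=
  let a := (proj1_sig g).1 in let n := (proj1_sig g).2 in
  exist (fun p => fsupp p.1) (fun j => (- a (j - n)%Z)%Z, (- n)%Z)
        (fsupp_inv n (proj2_sig g)).

Definition zw_one : ZwrZ := exist (fun p => fsupp p.1) (fun _ => 0%Z, 0%Z) fsupp0.

Definition Gww : grp := Grp zw_mul zw_inv zw_one.

Definition xZ : Gww := exist (fun p => fsupp p.1) (fun _ => 0%Z, 1%Z) fsupp0.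
Definition yZ : Gww :=
  exist (fun p => fsupp p.1) (fun j => if (j =? 0)%Z then 1%Z else 0%Z, 0%Z) fsupp_delta0.

Definition Hw (g : Gww) : bool := Z.even (proj1_sig g).2.

(* f_1 : y^{x^{2n}} |-> y^{x^n}, y^{x^{2n+1}} |-> 1, x^{2n} |-> x^n *)
Definition f1w (g : Gww) : Gww :=
  exist (fun p => fsupp p.1) (fun j => (proj1_sig g).1 (2 * j)%Z, ((proj1_sig g).2 / 2)%Z)
        (fsupp_dil (proj2_sig g)).

Definition f1'w (g : Gww) : Gww := f1w (gmul (gmul (ginv xZ) g) xZ).

Fixpoint zsum_from (a : Z -> Z) (lo : Z) (k : nat) : Z :=
  match k with O => 0%Z | S k' => (a lo + zsum_from a (lo + 1) k')%Z end.

Definition fs_sum (a : Z -> Z) (H : fsupp a) : Z :=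
  let N := proj1_sig (constructive_indefinite_description _ H) in
  zsum_from a (- Z.abs N)%Z (Z.to_nat (2 * Z.abs N + 1)).

(* f_2 : y |-> x, x |-> 1 *)
Definition f2w (g : Gww) : Gww :=
  exist (fun p => fsupp p.1) (fun _ => 0%Z, fs_sum (proj2_sig g)) fsupp0.

Definition D14 : seq (piece Gww) :=
  [:: Piece Hw f1w [:: gone; xZ]; Piece Hw f1'w [:: gone; xZ];
      Piece Hw f2w [:: gone; xZ]].

(* gamma_1 = (gamma_1,e,e,gamma_1,alpha_1,alpha_1),                    *)
(* alpha_1 = (e,alpha_1,e,alpha_1,e,e)(1 2)(3 4)(5 6)  *)
(* letters 1..6 are the ordinals 0..5                                   *)
Inductive st14 := Se | Sg | Sa.

Definition flip6 (i : 'I_6) : 'I_6 := inord (if odd i then i.-1 else i.+1).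

Definition perm14 (q : st14) (i : 'I_6) : 'I_6 :=
  match q with Sa => flip6 i | _ => i end.

Definition next14 (q : st14) (i : 'I_6) : st14 :=
  match q with
  | Se => Se
  | Sg => if (val i == 0) || (val i == 3) then Sg
          else if (val i == 4) || (val i == 5) then Sa else Se
  | Sa => if (val i == 1) || (val i == 3) then Sa else Se
  end.

Fixpoint aut14 (q : st14) (w : seq 'I_6) {struct w} : seq 'I_6 :=
  match w with
  | [::] => [::]
  | i :: w' => perm14 q i :: aut14 (next14 q i) w'
  end.

Definition gamma1 : seq 'I_6 -> seq 'I_6 := aut14 Sg.
Definition alpha1 : seq 'I_6 -> seq 'I_6 := aut14 Sa.

(* Main.v *)
Require Import Defs.
From mathcomp Require Import all_boot.
From Stdlib Require Import ZArith Lia FunctionalExtensionality ProofIrrelevance.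
From mathcomp Require Import zify.
From Stdlib Require Import IndefiniteDescription.

Lemma zw_eq (g h : Gww) : (forall j, (proj1_sig g).1 j = (proj1_sig h).1 j) ->
  (proj1_sig g).2 = (proj1_sig h).2 -> g = h.
Proof.
destruct g as [[a n] Ha], h as [[b k] Hb]; simpl; intros E1 E2.
assert (a = b) by (apply functional_extensionality; exact E1).
subst. f_equal. apply proof_irrelevance.
Qed.

Definition fn (g : Gww) := (proj1_sig g).1.
Definition tp (g : Gww) := (proj1_sig g).2.

Lemma fn_mul g h j : fn (gmul g h) j = (fn g j + fn h (j + tp g))%Z.
Proof. reflexivity. Qed.
Lemma tp_mul g h : tp (gmul g h) = (tp g + tp h)%Z.
Proof. reflexivity. Qed.
Lemma fn_inv g j : fn (ginv g) j = (- fn g (j - tp g))%Z.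
Proof. reflexivity. Qed.
Lemma tp_inv g : tp (ginv g) = (- tp g)%Z.
Proof. reflexivity. Qed.
Lemma fn_one j : fn (@gone Gww) j = 0%Z.
Proof. reflexivity. Qed.
Lemma tp_one : tp (@gone Gww) = 0%Z.
Proof. reflexivity. Qed.

Lemma zw_eq' (g h : Gww) : (forall j, fn g j = fn h j) -> tp g = tp h -> g = h.
Proof. exact: zw_eq. Qed.

Ltac zsimp := rewrite ?fn_mul ?tp_mul ?fn_inv ?tp_inv ?fn_one ?tp_one.

Lemma zmulA (a b c : Gww) : gmul (gmul a b) c = gmul a (gmul b c).
Proof.
apply zw_eq' => [j|]; zsimp; last lia.
replace (j + (tp a + tp b))%Z with (j + tp a + tp b)%Z by lia. lia.
Qed.
Lemma zmul1g (a : Gww) : gmul gone a = a.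
Proof. apply zw_eq' => [j|]; zsimp; last lia. by rewrite Z.add_0_r. Qed.
Lemma zmulg1 (a : Gww) : gmul a gone = a.
Proof. apply zw_eq' => [j|]; zsimp; lia. Qed.
Lemma zmulVg (a : Gww) : gmul (ginv a) a = gone.
Proof. apply zw_eq' => [j|]; zsimp; last lia.
replace (j + - tp a)%Z with (j - tp a)%Z by lia. lia. Qed.
Lemma zmulgV (a : Gww) : gmul a (ginv a) = gone.
Proof. apply zw_eq' => [j|]; zsimp; last lia.
replace (j + tp a - tp a)%Z with j by lia. lia. Qed.
Lemma zinvK (a : Gww) : ginv (ginv a) = a.
Proof. apply zw_eq' => [j|]; zsimp; last lia.
replace (j - - tp a)%Z with (j + tp a)%Z by lia. 
replace (j + tp a - tp a)%Z with j by lia. lia. Qed.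
Lemma zinvM (a b : Gww) : ginv (gmul a b) = gmul (ginv b) (ginv a).
Proof.
rewrite -[RHS]zmul1g -(zmulVg (gmul a b)) !zmulA -(zmulA b) zmulgV zmul1g zmulgV zmulg1.
done. Qed.
Lemma zinv1 : ginv (@gone Gww) = gone.
Proof. by rewrite -[LHS]zmulg1 zmulVg. Qed.
Open Scope Z_scope.

Lemma zsum_split a lo (k1 k2 : nat) :
  zsum_from a lo (k1 + k2)%nat = zsum_from a lo k1 + zsum_from a (lo + Z.of_nat k1) k2.
Proof.
elim: k1 lo => [|k1 IH] lo /=. by rewrite Z.add_0_r.
rewrite IH. replace (lo + 1 + Z.of_nat k1) with (lo + Z.pos (Pos.of_succ_nat k1)) by lia. lia.
Qed.

Lemma zsum_ext a b lo (k : nat) :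
  (forall j, lo <= j < lo + Z.of_nat k -> a j = b j) -> zsum_from a lo k = zsum_from b lo k.
Proof.
elim: k lo => [|k IH] lo H //=.
rewrite H; last lia. rewrite IH //. move=> j Hj; apply H; lia.
Qed.

Lemma zsum_zero a lo (k : nat) :
  (forall j, lo <= j < lo + Z.of_nat k -> a j = 0) -> zsum_from a lo k = 0.
Proof.
move=> H; rewrite (@zsum_ext a (fun _ => 0)) //.
elim: k {H} lo => [|k IH] lo //=; by rewrite IH.
Qed.

Lemma zsum_add a b lo (k : nat) :
  zsum_from (fun j => a j + b j) lo k = zsum_from a lo k + zsum_from b lo k.
Proof. elim: k lo => [|k IH] lo //=. rewrite IH; lia. Qed.

Lemma zsum_shift b n lo (k : nat) :
  zsum_from (fun j => b (j + n)) lo k = zsum_from b (lo + n) k.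
Proof. elim: k lo => [|k IH] lo //=. rewrite IH.
by replace (lo + 1 + n) with (lo + n + 1) by lia. Qed.

Definition supp_in (a : Z -> Z) lo hi := forall j, a j <> 0 -> lo <= j < hi.

Lemma zsum_big a lo (k : nat) L U : supp_in a lo (lo + Z.of_nat k) -> L <= lo -> lo + Z.of_nat k <= U ->
  zsum_from a L (Z.to_nat (U - L)) = zsum_from a lo k.
Proof.
move=> Hs HL HU.
have -> : Z.to_nat (U - L) = (Z.to_nat (lo - L) + (k + Z.to_nat (U - (lo + Z.of_nat k))))%nat by lia.
rewrite !zsum_split.
rewrite zsum_zero; last first.
  move=> j Hj. case: (Z.eq_dec (a j) 0) => // /Hs. lia.
rewrite (zsum_zero a (_ + _ + _)); last first.
  move=> j Hj. case: (Z.eq_dec (a j) 0) => // /Hs. lia.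
by replace (L + Z.of_nat (Z.to_nat (lo - L))) with lo by lia; lia.
Qed.

Lemma zsum_window a lo k lo' k' : supp_in a lo (lo + Z.of_nat k) -> supp_in a lo' (lo' + Z.of_nat k') ->
  zsum_from a lo k = zsum_from a lo' k'.
Proof.
move=> H1 H2.
rewrite -(@zsum_big a lo k (Z.min lo lo') (Z.max (lo + Z.of_nat k) (lo' + Z.of_nat k')) H1); try lia.
rewrite -(@zsum_big a lo' k' (Z.min lo lo') (Z.max (lo + Z.of_nat k) (lo' + Z.of_nat k')) H2); lia.
Qed.

Lemma fs_sum_eq a (H : fsupp a) lo k : supp_in a lo (lo + Z.of_nat k) ->
  fs_sum H = zsum_from a lo k.
Proof.
move=> Hs; rewrite /fs_sum.
case: (constructive_indefinite_description _ _) => N HN.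
rewrite [proj1_sig _]/=.
apply: zsum_window => // j Hj.
case: (Z_le_gt_dec (Z.abs j) N) => h; first lia.
exfalso; apply: Hj; apply: HN; lia.
Qed.

Lemma fsupp_supp a : fsupp a -> exists lo k, supp_in a lo (lo + Z.of_nat k).
Proof.
move=> [N HN]; exists (- Z.abs N), (Z.to_nat (2 * Z.abs N + 1)) => j Hj.
case: (Z_le_gt_dec (Z.abs j) N) => h; first lia.
exfalso; apply: Hj; apply: HN; lia.
Qed.

Lemma fn_f1 g j : fn (f1w g) j = fn g (2 * j).
Proof. reflexivity. Qed.
Lemma tp_f1 g : tp (f1w g) = tp g / 2.
Proof. reflexivity. Qed.
Lemma fn_f2 g j : fn (f2w g) j = 0.
Proof. reflexivity. Qed.
Lemma tp_f2 g : tp (f2w g) = fs_sum (proj2_sig g).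
Proof. reflexivity. Qed.
Lemma tp_x : tp xZ = 1. Proof. reflexivity. Qed.
Lemma fn_x j : fn xZ j = 0. Proof. reflexivity. Qed.
Lemma tp_y : tp yZ = 0. Proof. reflexivity. Qed.
Lemma fn_y j : fn yZ j = if (j =? 0) then 1 else 0. Proof. reflexivity. Qed.

Lemma Hw_tp g : Hw g = Z.even (tp g). Proof. reflexivity. Qed.

Lemma even_half n : Z.even n = true -> n = 2 * (n / 2).
Proof. move=> H. have := Z.div_mod n 2. rewrite Zmod_even H. lia. Qed.

Lemma f1_hom a b : Hw a -> Hw b -> f1w (gmul a b) = gmul (f1w a) (f1w b).
Proof.
rewrite !Hw_tp => /even_half Ha /even_half Hb.
apply zw_eq' => [j|]; rewrite ?fn_mul ?tp_mul ?fn_f1 ?tp_f1 ?fn_mul ?tp_mul.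
  congr (_ + fn b _); lia.
move: Ha Hb; set u := tp a / 2; set v := tp b / 2 => -> ->.
rewrite -Z.mul_add_distr_l Z.mul_comm Z_div_mult //.
Qed.

Lemma f1'_def g : f1'w g = f1w (gmul (gmul (ginv xZ) g) xZ).
Proof. reflexivity. Qed.

Lemma conj_tp g : tp (gmul (gmul (ginv xZ) g) xZ) = tp g.
Proof. rewrite !tp_mul tp_inv tp_x. lia. Qed.

Lemma f1'_hom a b : Hw a -> Hw b -> f1'w (gmul a b) = gmul (f1'w a) (f1'w b).
Proof.
move=> Ha Hb; rewrite !f1'_def -f1_hom; first last.
- by rewrite Hw_tp conj_tp -Hw_tp.
- by rewrite Hw_tp conj_tp -Hw_tp.
f_equal. rewrite !zmulA -(zmulA xZ) zmulgV zmul1g. done.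
Qed.

Lemma fs_sum_mul (a b : Gww) : fs_sum (proj2_sig (gmul a b)) = fs_sum (proj2_sig a) + fs_sum (proj2_sig b).
Proof.
have [lo1 [k1 H1]] := fsupp_supp _ (proj2_sig a).
have [lo2 [k2 H2]] := fsupp_supp _ (proj2_sig b).
set n := tp a.
set L := Z.min lo1 (lo2 - n).
set K := Z.to_nat (Z.max (lo1 + Z.of_nat k1) (lo2 + Z.of_nat k2 - n) - L).
rewrite (@fs_sum_eq _ (proj2_sig a) L K); last first.
  move=> j /H1; lia.
rewrite (@fs_sum_eq _ (proj2_sig b) (L + n) K); last first.
  move=> j /H2; lia.
rewrite (@fs_sum_eq _ _ L K); last first.
  move=> j Hj. change (fn a j + fn b (j + n) <> 0) in Hj.
  case: (Z.eq_dec (fn a j) 0) => E1.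
  - rewrite E1 in Hj. have := H2 (j + n). rewrite /fn in Hj. move=> /(_ ltac:(lia)). lia.
  - have := H1 j. rewrite /fn in E1. move=> /(_ E1). lia.
rewrite -zsum_shift -zsum_add. done.
Qed.

Lemma f2_hom a b : f2w (gmul a b) = gmul (f2w a) (f2w b).
Proof.
apply zw_eq' => [j|]; rewrite ?fn_mul ?tp_mul ?fn_f2 ?tp_f2 //.
exact: fs_sum_mul.
Qed.
Notation I6 := ('I_(size (pts D14))).
Definition tpos (b : bool) : Z := if b then 1 else 0.

Lemma pt_eq (p : I6) : pt D14 p = ((nat_of_ord p)./2, if odd p then xZ else gone).
Proof. by case: p => [[|[|[|[|[|[|?]]]]]] Hp]. Qed.

Lemma pH_eq (p : I6) : pH (ppiece D14 p) = Hw.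
Proof. by case: p => [[|[|[|[|[|[|?]]]]]] Hp]. Qed.

Lemma tp_pt (p : I6) : tp (pt D14 p).2 = tpos (odd p).
Proof. by case: p => [[|[|[|[|[|[|?]]]]]] Hp]. Qed.

Definition sig_of (b : bool) (p : I6) : I6 := if b then flip6 p else p.

Lemma even_lin c n : Z.even (c + n) = if Z.even c then Z.even n else ~~ Z.even n.
Proof. rewrite Z.even_add. by case: (Z.even c); case: (Z.even n). Qed.

Lemma even_par a b n : Z.even (tpos a + n + - tpos b) = (b == xorb a (Z.odd n)).
Proof.
rewrite -Z.negb_even. case: a; case: b; rewrite /tpos;
 rewrite ?Z.add_0_l ?Z.add_0_r ?Z.even_add ?Z.even_opp ?Z.even_1 ?Z.even_0;
 case: (Z.even n) => //.
Qed.

Lemma val_flip (p : 'I_6) : (flip6 p : nat) = if odd p then p.-1 else p.+1.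
Proof. by case: p => [[|[|[|[|[|[|?]]]]]] Hp] //; rewrite /flip6 inordK. Qed.

Lemma val_flip' (p : 'I_6) : \val (flip6 p) = if odd p then p.-1 else p.+1.
Proof. exact: val_flip. Qed.

Lemma fin_sig (b : bool) (p q : I6) :
  (((q : nat)./2 == (p : nat)./2)%N && (odd q == xorb (odd p) b)) = (q == sig_of b p).
Proof.
rewrite -(eqtype.inj_eq val_inj) /sig_of; case: b; rewrite ?val_flip ?val_flip';
by case: p => [[|[|[|[|[|[|?]]]]]] Hp] //; case: q => [[|[|[|[|[|[|?]]]]]] Hq].
Qed.

Lemma pick_key (g : Gww) (p q : I6) : (((pt D14 q).1 == (pt D14 p).1) &&
    Hw (gmul (gmul (pt D14 p).2 g) (ginv (pt D14 q).2))) = (q == sig_of (Z.odd (tp g)) p).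
Proof.
rewrite Hw_tp !tp_mul tp_inv !tp_pt even_par -fin_sig !pt_eq /=. done.
Qed.

Lemma gsigma_eq (g : Gww) (p : I6) : gsigma D14 g p = sig_of (Z.odd (tp g)) p.
Proof.
rewrite /gsigma pH_eq.
case: pickP => [q | H].
  by rewrite pick_key => /eqP.
by have := H (sig_of (Z.odd (tp g)) p); rewrite pick_key eqxx.
Qed.

Lemma ppiece_sig b (p : I6) : ppiece D14 (sig_of b p) = ppiece D14 p.
Proof.
rewrite /sig_of; case: b => //.
case: p => [[|[|[|[|[|[|?]]]]]] Hp] //; rewrite /ppiece /pt /flip6 /= ?inordK //.
Qed.

Lemma sig_of_comp b c (p : I6) : sig_of (xorb b c) p = sig_of c (sig_of b p).
Proof.
rewrite /sig_of; case: b; case: c => //=.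
apply/val_inj. rewrite !val_flip'.
case: p => [[|[|[|[|[|[|?]]]]]] Hp] //; rewrite /flip6 /= ?inordK //.
Qed.

Lemma odd_add (a b : Z) : Z.odd (a + b) = xorb (Z.odd a) (Z.odd b).
Proof. by rewrite Z.odd_add. Qed.

Lemma gsigma_mul g h (p : I6) : gsigma D14 (gmul g h) p = gsigma D14 h (gsigma D14 g p).
Proof. by rewrite !gsigma_eq tp_mul odd_add sig_of_comp. Qed.

Lemma gtheta_mul g h (p : I6) :
  gtheta D14 (gmul g h) p = gmul (gtheta D14 g p) (gtheta D14 h (gsigma D14 g p)).
Proof.
rewrite /gtheta gsigma_mul.
rewrite !zmulA. f_equal. f_equal. rewrite -!zmulA zmulVg zmul1g. done.
Qed.

Lemma gtheta_H g (p : I6) : Hw (gtheta D14 g p).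
Proof.
have := pick_key g p (sig_of (Z.odd (tp g)) p). rewrite eqxx => /andP [_].
by rewrite /gtheta gsigma_eq.
Qed.

Lemma pf_hom (p : I6) a b : Hw a -> Hw b ->
  pf (ppiece D14 p) (gmul a b) = gmul (pf (ppiece D14 p) a) (pf (ppiece D14 p) b).
Proof.
move=> Ha Hb.
case: p => [[|[|[|[|[|[|?]]]]]] Hp] //; rewrite /ppiece /pt /=;
 by [apply: f1_hom | apply: f1'_hom | apply: f2_hom].
Qed.

Lemma gstate_mul g h (p : I6) :
  gstate D14 (gmul g h) p = gmul (gstate D14 g p) (gstate D14 h (gsigma D14 g p)).
Proof.
rewrite /gstate gtheta_mul pf_hom ?gtheta_H //.
by have -> : ppiece D14 (gsigma D14 g p) = ppiece D14 p by rewrite gsigma_eq ppiece_sig.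
Qed.

Lemma phi_mul g h w : phi_act D14 (gmul g h) w = phi_act D14 h (phi_act D14 g w).
Proof.
elim: w g h => [|p w IH] g h //=.
by rewrite gsigma_mul gstate_mul IH.
Qed.

Lemma idem_one (a : Gww) : a = gmul a a -> a = gone.
Proof. move=> E. by rewrite -[a]zmul1g -(zmulVg a) zmulA -E. Qed.

Lemma pf_one (p : I6) : pf (ppiece D14 p) gone = gone.
Proof. apply: idem_one. by rewrite -pf_hom ?zmul1g. Qed.

Lemma gsigma_one (p : I6) : gsigma D14 gone p = p.
Proof. by rewrite gsigma_eq. Qed.

Lemma gstate_one (p : I6) : gstate D14 gone p = gone.
Proof. by rewrite /gstate /gtheta gsigma_one zmulg1 zmulgV pf_one. Qed.

Lemma phi_one w : phi_act D14 gone w = w.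
Proof. elim: w => [|p w IH] //=. by rewrite gsigma_one gstate_one IH. Qed.

Lemma fs_sum0 (a : Gww) : (forall j, fn a j = 0) -> fs_sum (proj2_sig a) = 0.
Proof. move=> H. rewrite (@fs_sum_eq _ _ 0 0) //. move=> j; rewrite -/(fn a j) H. done. Qed.

Lemma fs_sum_y : fs_sum (proj2_sig yZ) = 1.
Proof. rewrite (@fs_sum_eq _ _ 0 1) //. move=> j /=. case: Z.eqb_spec => //. lia. Qed.

Lemma fs_sum_x : fs_sum (proj2_sig xZ) = 0.
Proof. exact: fs_sum0. Qed.

Lemma fs_sum_inv (a : Gww) : fs_sum (proj2_sig (ginv a)) = - fs_sum (proj2_sig a).
Proof.
have : fs_sum (proj2_sig (gmul (ginv a) a)) = 0 by rewrite zmulVg; exact: fs_sum0.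
rewrite fs_sum_mul. lia.
Qed.

Definition yk : Gww := gmul (gmul xZ yZ) (ginv xZ).

Ltac zw := apply zw_eq' => [j|]; rewrite /fn /tp; cbn -[Z.mul Z.add Z.div Z.opp Z.sub Z.eqb]; repeat case: Z.eqb_spec; intros; try lia; try reflexivity.

Lemma f1_y : f1w yZ = yZ. Proof. zw. Qed.
Lemma f1_yk : f1w yk = gone. Proof. zw. Qed.
Lemma f1'_y : f1'w yZ = gone. Proof. zw. Qed.
Lemma f1'_yk : f1'w yk = yZ. Proof. zw. Qed.
Lemma f2_y : f2w yZ = xZ. Proof. apply zw_eq' => [j|] //. by rewrite tp_f2 fs_sum_y. Qed.
Lemma f2_yk : f2w yk = xZ.
Proof. apply zw_eq' => [j|] //. by rewrite tp_f2 /yk !fs_sum_mul fs_sum_inv fs_sum_y fs_sum_x. Qed.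
Lemma f1_xx : f1w (gmul xZ xZ) = xZ. Proof. zw. Qed.
Lemma f1'_xx : f1'w (gmul xZ xZ) = xZ. Proof. zw. Qed.
Lemma f2_xx : f2w (gmul xZ xZ) = gone.
Proof. apply zw_eq' => [j|] //. by rewrite tp_f2 !fs_sum_mul fs_sum_x. Qed.

Definition g_of (q : st14) : Gww := match q with Se => gone | Sg => yZ | Sa => xZ end.

Lemma gsigma_g (q : st14) (p : I6) : gsigma D14 (g_of q) p = perm14 q p.
Proof. by rewrite gsigma_eq; case: q. Qed.

Lemma f1_one : f1w gone = gone. Proof. zw. Qed.
Lemma f1'_one : f1'w gone = gone. Proof. zw. Qed.
Lemma f2_one : f2w gone = gone.
Proof. apply zw_eq' => [j|] //. rewrite tp_f2 fs_sum0 //. Qed.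

Arguments gmul : simpl never.
Arguments ginv : simpl never.
Arguments gone : simpl never.

Lemma gstate_g (q : st14) (p : I6) : gstate D14 (g_of q) p = g_of (next14 q p).
Proof.
case: q; first by rewrite /= gstate_one; case: p => [[|[|[|[|[|[|?]]]]]] Hp].
- rewrite /gstate /gtheta gsigma_eq /sig_of.
  case: p => [[|[|[|[|[|[|?]]]]]] Hp] //; rewrite /ppiece /pt /=;
  rewrite ?zmul1g ?zinv1 ?zmulg1 -/yk;
  by [rewrite f1_y | rewrite f1_yk | rewrite f1'_y | rewrite f1'_yk | rewrite f2_y | rewrite f2_yk].
- rewrite /gstate /gtheta gsigma_eq /sig_of.
  case: p => [[|[|[|[|[|[|?]]]]]] Hp] //; rewrite /ppiece /pt /flip6 /= ?inordK //=.
  all: rewrite ?zmul1g ?zinv1 ?zmulg1 ?zmulgV.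
  all: by [rewrite f1_xx | rewrite f1'_xx | rewrite f2_xx | rewrite f1_one | rewrite f1'_one | rewrite f2_one].
Qed.

Lemma phi_g (q : st14) (w : list I6) : phi_act D14 (g_of q) w = aut14 q w.
Proof.
elim: w q => [|p w IH] q //=.
by rewrite gsigma_g gstate_g IH.
Qed.

Lemma fn_f1' k j : fn (f1'w k) j = fn k (2 * j - 1).
Proof.
rewrite f1'_def fn_f1 !fn_mul fn_inv !fn_x tp_inv tp_x.
have -> : (2 * j + - (1)) = 2 * j - 1 by lia. lia.
Qed.

Section Ktriv.
Variable K : Gww -> Prop.
Hypothesis HH : forall k, K k -> Hw k.
Hypothesis I1 : forall k, K k -> K (f1w k).
Hypothesis I1' : forall k, K k -> K (f1'w k).
Hypothesis I2 : forall k, K k -> K (f2w k).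

Lemma K_tp0 (N : nat) : forall k, K k -> Z.abs (tp k) <= Z.of_nat N -> tp k = 0.
Proof.
elim: N => [|N IH] k Kk Hk; first lia.
have E : tp k = 2 * (tp k / 2) := even_half _ (HH _ Kk).
have h2 : Z.abs (tp k / 2) <= Z.of_nat N by rewrite Nat2Z.inj_succ in Hk; lia.
have := IH _ (I1 _ Kk). rewrite tp_f1. move=> /(_ h2). lia.
Qed.

Lemma K_tp k : K k -> tp k = 0.
Proof. move=> Kk. apply: (@K_tp0 (Z.abs_nat (tp k))) => //; lia. Qed.

Lemma K_single k c : K k -> (forall j, j <> c -> fn k j = 0) -> fn k c = 0.
Proof.
move=> Kk Hc. have := K_tp _ (I2 _ Kk). rewrite tp_f2 (@fs_sum_eq _ _ c 1).
  by rewrite /= Z.add_0_r.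
move=> j Hj. case: (Z.eq_dec j c) => [->|/Hc]; first lia. move: Hj; rewrite /fn => Hj E. by case: Hj.
Qed.

Lemma halves k : (forall j, fn k (2 * j) = 0) -> (forall j, fn k (2 * j - 1) = 0) -> forall j, fn k j = 0.
Proof.
move=> H1 H2 j. have := Z.div_mod j 2. have := Z.mod_pos_bound j 2. move=> /(_ ltac:(lia)) B E.
case: (Z.eq_dec (j mod 2) 0) => h.
  have -> : j = 2 * (j / 2) by lia. apply: H1.
have -> : j = 2 * (j / 2 + 1) - 1 by lia. apply: H2.
Qed.

Lemma suppK k lo hi : supp_in (fn k) lo hi -> forall j, (j < lo \/ hi <= j) -> fn k j = 0.
Proof. move=> H j Hj. case: (Z.eq_dec (fn k j) 0) => // /H. lia. Qed.

Lemma K_fn0 (N : nat) : forall k, K k -> supp_in (fn k) (- Z.of_nat N) (Z.of_nat N + 2) -> forall j, fn k j = 0.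
Proof.
elim: N => [|N IH] k Kk Hs.
- have A0 : fn k 0 = 0.
    have := K_single _ 0 (I1 _ Kk). rewrite fn_f1 Z.mul_0_r. apply.
    move=> j Hj. rewrite fn_f1. apply: (suppK _ _ _ Hs). lia.
  have A1 : fn k 1 = 0.
    have := K_single _ 1 (I1' _ Kk). rewrite fn_f1'. apply.
    move=> j Hj. rewrite fn_f1'. apply: (suppK _ _ _ Hs). lia.
  move=> j. case: (Z.eq_dec j 0) => [->//|h0]. case: (Z.eq_dec j 1) => [->//|h1].
  apply: (suppK _ _ _ Hs). lia.
- apply: halves.
  + move=> j. rewrite -fn_f1. apply: IH (I1 _ Kk) _ j.
    move=> i; rewrite fn_f1 => /Hs. lia.
  + move=> j. rewrite -fn_f1'. apply: IH (I1' _ Kk) _ j.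
    move=> i; rewrite fn_f1' => /Hs. lia.
Qed.

Lemma K_triv k : K k -> k = gone.
Proof.
move=> Kk. have [N0 HN] := proj2_sig k.
apply: zw_eq'; last by rewrite (K_tp _ Kk).
apply: (@K_fn0 (Z.abs_nat N0)) => // j Hj.
case: (Z_le_gt_dec (Z.abs j) N0) => h; first lia.
exfalso; apply: Hj; apply: HN; lia.
Qed.
End Ktriv.

Lemma In1 : List.In (Piece Hw f1w [:: gone; xZ]) D14. Proof. by left. Qed.
Lemma In2 : List.In (Piece Hw f1'w [:: gone; xZ]) D14. Proof. by right; left. Qed.
Lemma In3 : List.In (Piece Hw f2w [:: gone; xZ]) D14. Proof. by right; right; left. Qed.

Lemma para : parabolic_trivial D14.
Proof.
move=> K _ Hsub Hinv k Kk.
refine (K_triv K _ _ _ _ k Kk).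
- move=> j Kj. exact: (Hsub _ In1 j Kj).
- move=> j Kj. exact: ((Hinv _ In1).2 j Kj).
- move=> j Kj. exact: ((Hinv _ In2).2 j Kj).
- move=> j Kj. exact: ((Hinv _ In3).2 j Kj).
Qed.

Lemma simple : gdata_simple D14.
Proof. move=> K HK Hsub _ Hinv. exact: para. Qed.

Lemma normalH : is_normal (fun g : Gww => Hw g).
Proof.
move=> g s. rewrite !Hw_tp !tp_mul tp_inv.
by have -> : - tp g + tp s + tp g = tp s by lia.
Qed.

Lemma subH : is_subgroup (fun g : Gww => Hw g).
Proof.
split; first by rewrite Hw_tp tp_one.
split.
  move=> a b; rewrite !Hw_tp tp_mul Z.even_add => -> -> //.
move=> a; rewrite !Hw_tp tp_inv Z.even_opp //.
Qed.

Lemma transH : right_transversal (fun g : Gww => Hw g) [:: gone; xZ].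
Proof.
split.
  move=> g. case E: (Z.even (tp g)).
    exists gone; split; first by left.
    by rewrite Hw_tp tp_mul tp_inv tp_one Z.add_0_r.
  exists xZ; split; first by right; left.
  by rewrite Hw_tp tp_mul tp_inv tp_x Z.even_add E.
case=> [|[|k]]; case=> [|[|l]] //= _ _ _;
  by rewrite Hw_tp tp_mul tp_inv ?tp_x ?tp_one.
Qed.

Lemma validD : valid_gdata D14.
Proof.
move=> P [<-|[<-|[<-|[]]]]; (split; [exact: subH | split; [|exact: transH]]).
- move=> a b; exact: f1_hom.
- move=> a b; exact: f1'_hom.
- move=> a b _ _; exact: f2_hom.
Qed.

Definition p0 : I6 := @Ordinal 6 0 isT.
Definition p2 : I6 := @Ordinal 6 2 isT.
Definition p4 : I6 := @Ordinal 6 4 isT.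

Lemma phi_cons g (p : I6) w : phi_act D14 g (p :: w) = gsigma D14 g p :: phi_act D14 (gstate D14 g p) w.
Proof. reflexivity. Qed.

Lemma gtheta_ker k (p : I6) : Hw k -> ~~ odd p -> gtheta D14 k p = k.
Proof.
rewrite Hw_tp -Z.negb_odd => /negbTE Ho Hp.
rewrite /gtheta gsigma_eq Ho /sig_of pt_eq /=.
by rewrite (negbTE Hp) zmul1g zinv1 zmulg1.
Qed.

Lemma phi_inj : injective (phi_act D14).
Proof.
move=> g h E.
pose K := fun k => forall w, phi_act D14 k w = w.
have Kgh : K (gmul g (ginv h)).
  move=> w. by rewrite phi_mul E -phi_mul zmulgV phi_one.
have HH : forall k, K k -> Hw k.
  move=> k Kk. have := Kk [:: p0]. rewrite phi_cons gsigma_eq => /(congr1 (seq.head p0)) Hs.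
  rewrite Hw_tp -Z.negb_odd. move: Hs. rewrite /sig_of. case: (Z.odd (tp k)) => //.
  move/(congr1 val). by rewrite val_flip'.
have KS : forall k (p : I6), K k -> K (gstate D14 k p).
  move=> k p Kk w. have := Kk (p :: w). rewrite phi_cons. by case.
have Kf : forall k (p : I6), K k -> ~~ odd p -> K (pf (ppiece D14 p) k).
  move=> k p Kk Hp. have := KS k p Kk. by rewrite /gstate gtheta_ker // HH.
have E1 := K_triv K HH (fun k Kk => Kf k p0 Kk isT) (fun k Kk => Kf k p2 Kk isT)
  (fun k Kk => Kf k p4 Kk isT) _ Kgh.
by rewrite -[g]zmulg1 -(zmulVg h) -zmulA E1 zmul1g.
Qed.

Lemma phi_tree g : is_tree_aut (phi_act D14 g).
Proof.
split; first done. split.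
- move=> v i. elim: v g => [|p v IH] g /=.
    by exists (gsigma D14 g i).
  have [j Hj] := IH (gstate D14 g p). exists j. by rewrite Hj.
- exists (phi_act D14 (ginv g)) => w; by rewrite -phi_mul ?zmulgV ?zmulVg phi_one.
Qed.

Inductive gen : Gww -> Prop :=
| gen1 : gen gone
| genx : gen xZ
| geny : gen yZ
| genm a b : gen a -> gen b -> gen (gmul a b)
| geni a : gen a -> gen (ginv a).

Lemma Zsplit (c : Z) : exists m : nat, c = Z.of_nat m \/ c = - Z.of_nat m.
Proof. exists (Z.abs_nat c). lia. Qed.

Lemma gen_top g : (forall j, fn g j = 0) -> gen g.
Proof.
have pos : forall m : nat, forall g, (forall j, fn g j = 0) -> tp g = Z.of_nat m -> gen g.
  elim=> [|m IH] g0 H0 T0.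
    have -> : g0 = gone by apply: zw_eq' => [j|]; rewrite ?fn_one ?tp_one ?H0 ?T0.
    exact: gen1.
  have -> : g0 = gmul (gmul g0 (ginv xZ)) xZ by rewrite zmulA zmulVg zmulg1.
  apply: genm; last exact: genx.
  apply: IH => [j|]; rewrite ?fn_mul ?tp_mul ?fn_inv ?tp_inv ?fn_x ?tp_x ?H0 //. lia.
move=> H. have [m [E|E]] := Zsplit (tp g).
  exact: pos H E.
rewrite -[g]zinvK. apply: geni. apply: (pos m) => [j|]; rewrite ?fn_inv ?tp_inv ?H //. lia.
Qed.

Definition xp (k : Z) : Gww := exist (fun p => fsupp p.1) (fun _ => 0, k) fsupp0.

Lemma fsupp_dl lo c : fsupp (fun j => if (j =? lo) then c else 0).
Proof. exists (Z.abs lo) => j Hj. case: Z.eqb_spec => //. lia. Qed.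

Definition dl (lo c : Z) : Gww :=
  exist (fun p => fsupp p.1) (fun j => if (j =? lo) then c else 0, 0) (fsupp_dl lo c).

Definition ek (k : Z) : Gww := gmul (gmul (ginv (xp k)) yZ) (xp k).

Lemma gen_dl lo c : gen (dl lo c).
Proof.
have pos : forall m : nat, gen (dl lo (Z.of_nat m)).
  elim=> [|m IH].
    apply: gen_top => j. rewrite /fn /=. by case: (j =? lo).
  have -> : dl lo (Z.of_nat m.+1) = gmul (dl lo (Z.of_nat m)) (ek lo).
    apply: zw_eq' => [j|]; rewrite /ek ?fn_mul ?tp_mul ?fn_inv ?tp_inv; rewrite /fn /tp /=;
      repeat case: Z.eqb_spec; intros; lia.
  apply: genm => //. apply: genm; last by apply: gen_top.
  apply: genm; last exact: geny. apply: geni. by apply: gen_top.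
have [m [->|->]] := Zsplit c; first exact: pos.
have -> : dl lo (- Z.of_nat m) = ginv (dl lo (Z.of_nat m)).
  apply: zw_eq' => [j|]; rewrite ?fn_inv ?tp_inv; rewrite /fn /tp /=;
      repeat case: Z.eqb_spec; intros; lia.
exact: geni.
Qed.

Lemma gen_base (k : nat) : forall lo g, tp g = 0 -> supp_in (fn g) lo (lo + Z.of_nat k) -> gen g.
Proof.
elim: k => [|k IH] lo g T Hs.
  apply: gen_top => j. case: (Z.eq_dec (fn g j) 0) => // /Hs. lia.
have -> : g = gmul (gmul g (ginv (dl lo (fn g lo)))) (dl lo (fn g lo)) by rewrite zmulA zmulVg zmulg1.
apply: genm; last exact: gen_dl.
apply: (IH (lo + 1)).
  by rewrite tp_mul tp_inv T.
move=> j. rewrite fn_mul fn_inv T. rewrite /fn /tp /=. rewrite Z.add_0_r Z.sub_0_r.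
case: Z.eqb_spec => [->|Hj]. lia.
move=> H. have := Hs j. rewrite /fn. move=> /(_ ltac:(lia)). lia.
Qed.

Lemma all_gen g : gen g.
Proof.
have -> : g = gmul (gmul g (ginv (xp (tp g)))) (xp (tp g)) by rewrite zmulA zmulVg zmulg1.
apply: genm; last by apply: gen_top.
have [lo [k Hs]] := fsupp_supp _ (proj2_sig g).
apply: (gen_base k lo).
  rewrite tp_mul tp_inv /tp /=. lia.
move=> j. rewrite fn_mul fn_inv /fn /= => H. apply: Hs. lia.
Qed.

Fixpoint stv (g : Gww) (v : list I6) : Gww :=
  match v with [::] => g | p :: v' => stv (gstate D14 g p) v' end.

Lemma phi_app g (v w : list I6) : phi_act D14 g (v ++ w) = phi_act D14 g v ++ phi_act D14 (stv g v) w.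
Proof. elim: v g => [|p v IH] g //=. by rewrite IH. Qed.

Lemma size_phi g (v : list I6) : size (phi_act D14 g v) = size v.
Proof. elim: v g => [|p v IH] g //=. by rewrite IH. Qed.

Lemma section_eq g (v : list I6) : section (phi_act D14 g) v = phi_act D14 (stv g v).
Proof.
apply: functional_extensionality => w. rewrite /section phi_app.
by rewrite -(size_phi g v) drop_size_cat.
Qed.

Lemma stv_mul g h (v : list I6) : stv (gmul g h) v = gmul (stv g v) (stv h (phi_act D14 g v)).
Proof. elim: v g h => [|p v IH] g h //=. by rewrite gstate_mul IH. Qed.

Lemma stv_one (v : list I6) : stv gone v = gone.
Proof. elim: v => [|p v IH] //=. by rewrite gstate_one. Qed.

Lemma stv_inv g (v : list I6) : stv (ginv g) v = ginv (stv g (phi_act D14 (ginv g) v)).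
Proof.
have := stv_mul (ginv g) g v. rewrite zmulVg stv_one.
set a := stv (ginv g) v; set b := stv g _ => E.
by rewrite -[a]zmulg1 -(zmulgV b) -zmulA -E zmul1g.
Qed.

Lemma stv_g q (v : list I6) : exists q', stv (g_of q) v = g_of q'.
Proof. elim: v q => [|p v IH] q /=; first by exists q. by rewrite gstate_g. Qed.

Definition FS (g : Gww) := exists L : list Gww, forall v, List.In (stv g v) L.

Lemma FS_gen g : gen g -> FS g.
Proof.
elim=> {g}.
- exists [:: gone] => v; rewrite stv_one; by left.
- exists [:: gone; yZ; xZ] => v. have [q ->] := stv_g Sa v. case: q => /=; tauto.
- exists [:: gone; yZ; xZ] => v. have [q ->] := stv_g Sg v. case: q => /=; tauto.
- move=> a b _ [La Ha] _ [Lb Hb].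
  exists (List.flat_map (fun u => List.map (fun w => gmul u w) Lb) La) => v.
  rewrite stv_mul. apply/List.in_flat_map. exists (stv a v); split => //.
  apply: List.in_map. exact: Hb.
- move=> a _ [La Ha]. exists (List.map ginv La) => v. rewrite stv_inv. apply: List.in_map. exact: Ha.
Qed.

Lemma phi_fs g : finite_state (phi_act D14 g).
Proof.
have [L HL] := FS_gen _ (all_gen g).
exists (List.map (phi_act D14) L) => v. rewrite section_eq. apply: List.in_map. exact: HL.
Qed.

Lemma phi_y : phi_act D14 yZ = gamma1.
Proof. apply: functional_extensionality => w. exact: (phi_g Sg w). Qed.
Lemma phi_x : phi_act D14 xZ = alpha1.
Proof. apply: functional_extensionality => w. exact: (phi_g Sa w). Qed.

Lemma phi_image (t : seq.seq I6 -> seq.seq I6) :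
  (exists g : Gww, phi_act D14 g = t) <-> gen_sub [:: gamma1; alpha1] t.
Proof.
split.
- move=> [g <-]. elim: (all_gen g) => {g}.
  + have -> : phi_act D14 gone = id by apply: functional_extensionality => w; exact: phi_one.
    exact: gen_id.
  + rewrite phi_x. apply: gen_in. by right; left.
  + rewrite phi_y. apply: gen_in. by left.
  + move=> a b _ Ha _ Hb.
    have -> : phi_act D14 (gmul a b) = (fun w => phi_act D14 b (phi_act D14 a w))
      by apply: functional_extensionality => w; exact: phi_mul.
    exact: gen_mul.
  + move=> a _ Ha. apply: (gen_inv Ha).
    * move=> w. by rewrite -phi_mul zmulgV phi_one.
    * move=> w. by rewrite -phi_mul zmulVg phi_one.
- elim=> {t}.
  + exists gone. apply: functional_extensionality => w; exact: phi_one.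
  + move=> f [<-|[<-|[]]]; [exists yZ; exact: phi_y | exists xZ; exact: phi_x].
  + move=> f g _ [a Ha] _ [b Hb]. exists (gmul a b).
    apply: functional_extensionality => w. by rewrite phi_mul Ha Hb.
  + move=> f g _ [a Ha] fg gf. exists (ginv a).
    apply: functional_extensionality => w.
    have E : phi_act D14 a (phi_act D14 (ginv a) w) = w by rewrite -phi_mul zmulVg phi_one.
    by rewrite -[in RHS]E Ha fg.
Qed.

Close Scope Z_scope.

Theorem mainTheorem14 :
  is_normal (fun g : Gww => Hw g) /\ valid_gdata D14 /\
  gdata_simple D14 /\ parabolic_trivial D14 /\
  (forall g : Gww, is_tree_aut (phi_act D14 g)) /\
  (forall g h : Gww, phi_act D14 (gmul g h) = (fun w => phi_act D14 h (phi_act D14 g w))) /\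
  injective (phi_act D14) /\
  phi_act D14 yZ = gamma1 /\ phi_act D14 xZ = alpha1 /\
  (forall g : Gww, finite_state (phi_act D14 g)) /\
  (forall t : seq 'I_6 -> seq 'I_6,
      (exists g : Gww, phi_act D14 g = t) <-> gen_sub [:: gamma1; alpha1] t).
Proof.
split; first exact: normalH.
split; first exact: validD.
split; first exact: simple.
split; first exact: para.
split; first exact: phi_tree.
split.
  move=> g h. apply: functional_extensionality => w. exact: phi_mul.
split; first exact: phi_inj.
split; first exact: phi_y.
split; first exact: phi_x.
split; first exact: phi_fs.
exact: phi_image.
Qed.
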